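(* Let $1\le r\le s\le t$ and let $u=ABCd$, $v=A'B'C'd'$ be vertices of $E3C(r,s,t)$ with $A=A'$, $B\ne B'$, $C\ne C'$ and $d\ne d'$. Then there exist $2r+2$ pairwise internally disjoint $u$–$v$ paths in $E3C(r,s,t)$, each of length at most $s+t+7$.
   Context: The exchanged 3-ary $n$-cube $E3C(r,s,t)$ ($r,s,t\ge1$, $n=r+s+t+1$): vertices are strings written $x=ABCd$ with $A\in\{0,1,2\}^r$, $B\in\{0,1,2\}^s$, $C\in\{0,1,2\}^t$, $d\in\{0,1,2\}$. Two distinct vertices $x=ABCd$, $y=A'B'C'd'$ are adjacent iff one of: (E0) $A=A',B=B',C=C'$ and $d\ne d'$; (E1) $d=d'=0$, $A=A'$, $B=B'$ and $C,C'$ differ in exactly one position; (E2) $d=d'=1$, $A=A'$, $C=C'$ and $B,B'$ differ in exactly one position; (E3) $d=d'=2$, $B=B'$, $C=C'$ and $A,A'$ differ in exactly one position. Paths are internally disjoint if they share no vertices other than their endpoints; length = number of edges. *)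

(* Defs.v *)
From mathcomp Require Import all_boot.
Set Implicit Arguments. Unset Strict Implicit. Unset Printing Implicit Defensive.

Definition word (n : nat) := n.-tuple 'I_3.

Definition e3c_vertex (r s t : nat) : finType :=
  (word r * word s * word t * 'I_3)%type.

Definition differ1 (n : nat) (A A' : word n) : bool :=
  #|[pred i : 'I_n | tnth A i != tnth A' i]| == 1.

Definition e3c_adj (r s t : nat) : rel (e3c_vertex r s t) :=
  fun x y =>
    let: (A, B, C, d) := x in
    let: (A', B', C', d') := y in
    [|| [&& A == A', B == B', C == C' & d != d'],
        [&& d == 0%N :> nat, d' == 0%N :> nat, A == A', B == B' & differ1 C C'],
        [&& d == 1%N :> nat, d' == 1%N :> nat, A == A', C == C' & differ1 B B']
      | [&& d == 2%N :> nat, d' == 2%N :> nat, B == B', C == C' & differ1 A A']].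

(* A u-v path is represented by the sequence p of vertices after u,
   i.e. the path is u :: p; it is a simple path ending at v.
   Its length (number of edges) is size p. *)
Definition is_uv_path (r s t : nat) (u v : e3c_vertex r s t)
    (p : seq (e3c_vertex r s t)) : Prop :=
  [/\ path (@e3c_adj r s t) u p, last u p = v & uniq (u :: p)].

(* Internal vertices of such a path: those of p other than v (u is not in p). *)
Definition internally_disjoint (r s t : nat) (v : e3c_vertex r s t)
    (p q : seq (e3c_vertex r s t)) : Prop :=
  forall x, x \in p -> x \in q -> x = v.

(* Main.v *)
Require Import Defs.
From mathcomp Require Import all_boot.
From mathcomp Require Import zify.
Set Implicit Arguments. Unset Strict Implicit. Unset Printing Implicit Defensive.

Section Words.
Variable n : nat.
Implicit Types w z : word n.

Definition at_ (w : word n) (i : nat) : 'I_3 := nth ord0 w i.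

Lemma tnth_at w (j : 'I_n) : tnth w j = at_ w j.
Proof. by rewrite /at_ (tnth_nth ord0). Qed.

Definition upd (w : word n) (i : nat) (x : 'I_3) : word n :=
  [tuple (if (j : nat) == i then x else tnth w j) | j < n].

Lemma at_upd w i x q : q < n -> at_ (upd w i x) q = if q == i then x else at_ w q.
Proof. move=> hq; rewrite -[q]/(nat_of_ord (Ordinal hq)) -tnth_at tnth_mktuple tnth_at //. Qed.

Lemma word_ext w z : (forall q, q < n -> at_ w q = at_ z q) -> w = z.
Proof. move=> h; apply: eq_from_tnth => j; rewrite !tnth_at; exact: h. Qed.

Lemma differ1_upd w i x : i < n -> x != at_ w i -> differ1 w (upd w i x).
Proof.
move=> hi hx; rewrite /differ1.
rewrite (@eq_card _ _ (pred1 (Ordinal hi))) ?card1 // => j.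
rewrite !inE !tnth_at (at_upd _ _ _ (ltn_ord j)).
have -> : (j == Ordinal hi) = (nat_of_ord j == i) by [].
case: ifP => [/eqP hj|hj]; rewrite ?hj ?eqxx //.
by rewrite eq_sym hx.
Qed.

Lemma differ1C w z : differ1 w z = differ1 z w.
Proof. by rewrite /differ1; congr (_ == _); apply: eq_card => j; rewrite !inE eq_sym. Qed.

Lemma upd_neq w i x : i < n -> x != at_ w i -> upd w i x != w.
Proof. move=> hi hx; apply/eqP => /(congr1 (fun z => at_ z i)); rewrite at_upd // eqxx => e.
by rewrite e eqxx in hx. Qed.

Lemma upd_inj w i x i' x' : i < n -> i' < n -> x != at_ w i -> x' != at_ w i' ->
  upd w i x = upd w i' x' -> i = i' /\ x = x'.
Proof.
move=> hi hi' hx hx' e.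
have := congr1 (fun z => at_ z i) e; rewrite !at_upd // eqxx.
case: eqP => [-> -> //|_ ex]; by rewrite ex eqxx in hx.
Qed.

End Words.

Definition nx (a : 'I_3) (b : bool) : 'I_3 := inord ((a + 1 + b) %% 3).

Lemma nx_neq a b : nx a b != a.
Proof. by case: a => [[|[|[|]]] //] ? ; case: b; rewrite /nx -val_eqE /= inordK. Qed.

Lemma nx_inj a b b' : nx a b = nx a b' -> b = b'.
Proof. by case: a => [[|[|[|]]] //] ?; case: b; case: b' => // /(congr1 val); rewrite /= !inordK. Qed.

Section Walk.
Variable n : nat.
Implicit Types w z : word n.

Fixpoint wk (w w' : word n) (ps : seq nat) : seq (word n) :=
  match ps with
  | [::] => [::]
  | p :: ps' => if at_ w p == at_ w' p then wk w w' ps'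
                else upd w p (at_ w' p) :: wk (upd w p (at_ w' p)) w' ps'
  end.

Lemma wk_path w w' ps : all (fun p => p < n) ps -> path (@differ1 n) w (wk w w' ps).
Proof.
elim: ps w => //= p ps IH w /andP[hp hps].
case: ifP => [_|/negbT h]; first exact: IH.
rewrite /= differ1_upd //; last by rewrite eq_sym.
exact: IH.
Qed.

Lemma wk_size w w' ps : size (wk w w' ps) <= size ps.
Proof. elim: ps w => //= p ps IH w; case: ifP => _ /=; [exact: leqW | by rewrite ltnS]. Qed.

Lemma wk_last w w' ps : all (fun p => p < n) ps ->
  (forall q, q < n -> at_ w q != at_ w' q -> q \in ps) -> last w (wk w w' ps) = w'.
Proof.
elim: ps w => [|p ps IH] w /=.
  by move=> _ h; apply: word_ext => q hq; apply/eqP; apply/negPn/negP => /(h q hq).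
case/andP=> hp hps h; case: ifP => [/eqP e|/negbT ne] /=; apply: IH => // q hq.
  move=> hne; have := h q hq hne; rewrite inE; case: eqP => [eq|//] _.
  by rewrite eq e eqxx in hne.
rewrite at_upd //; case: (eqVneq q p) => [->|nq]; first by rewrite eqxx.
by move=> /(h q hq); rewrite inE (negbTE nq).
Qed.

Lemma wk_stay w w' ps q : q < n -> at_ w q = at_ w' q ->
  forall z, z \in wk w w' ps -> at_ z q = at_ w' q.
Proof.
move=> hq; elim: ps w => //= p ps IH w e z; case: ifP => _; first exact: IH.
have e2 : at_ (upd w p (at_ w' p)) q = at_ w' q.
  by rewrite at_upd //; case: eqP => [->|].
rewrite inE => /orP[/eqP ->//|]; exact: IH.
Qed.

Lemma wk_first w w' ps q : q < n ->
  forall z, z \in wk w w' (q :: ps) -> at_ z q = at_ w' q.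
Proof.
move=> hq z /=; case: ifP => [/eqP e|_]; first exact: wk_stay.
have e2 : at_ (upd w q (at_ w' q)) q = at_ w' q by rewrite at_upd // eqxx.
rewrite inE => /orP[/eqP ->//|]; exact: wk_stay.
Qed.

Lemma wk_lastpos w w' ps q : q < n -> q \notin ps ->
  forall z, z \in wk w w' (rcons ps q) -> at_ z q = at_ w q \/ z = last w (wk w w' (rcons ps q)).
Proof.
move=> hq; elim: ps w => [|p ps IH] w /=.
  by move=> _ z; case: ifP => //= _; rewrite inE => /eqP ->; right.
rewrite inE negb_or => /andP[hpq hps] z; case: ifP => _; first exact: IH.
have e2 : at_ (upd w p (at_ w' p)) q = at_ w q.
  by rewrite at_upd //; case: eqP => // e; rewrite e eqxx in hpq.
rewrite inE => /orP[/eqP ->|]; first by left.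
by move/(IH _ hps); rewrite e2.
Qed.

Lemma wk_head w w' ps i x : all (fun p => p < n) ps -> i < n -> x != at_ w i ->
  upd w i x \in wk w w' ps -> upd w i x = nth w (wk w w' ps) 0.
Proof.
elim: ps w => //= p ps IH w /andP[hp hps] hi hx; case: ifP => [_|/negbT ne]; first exact: IH.
rewrite inE => /orP[/eqP -> //|hin] /=.
have e2 : at_ (upd w p (at_ w' p)) p = at_ w' p by rewrite at_upd // eqxx.
have := wk_stay hp e2 hin; rewrite at_upd //.
case: eqP => [<- ex|ne2 ew]; last by rewrite ew eqxx in ne.
by rewrite ex.
Qed.

End Walk.

Definition L0 : 'I_3 := @Ordinal 3 0 isT.
Definition L1 : 'I_3 := @Ordinal 3 1 isT.
Definition L2 : 'I_3 := @Ordinal 3 2 isT.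

Lemma path_mapf (T1 T2 : Type) (e1 : rel T1) (e2 : rel T2) (f : T1 -> T2) x s :
  (forall a b, e1 a b -> e2 (f a) (f b)) -> path e1 x s -> path e2 (f x) (map f s).
Proof. move=> h; elim: s x => //= y s IH x /andP[a b]; rewrite h //=; exact: IH. Qed.

Section Graph.
Variables r s t : nat.
Local Notation V := (e3c_vertex r s t).
Local Notation adj := (@e3c_adj r s t).

Lemma adj_sym (x y : V) : adj x y = adj y x.
Proof.
case: x => [[[A B] C] d]; case: y => [[[A' B'] C'] d'].
rewrite /e3c_adj !(eq_sym A) !(eq_sym B) !(eq_sym C) !(eq_sym d) (differ1C C) (differ1C B) (differ1C A).
by congr (_ || (_ || (_ || _))); rewrite andbCA.
Qed.

Lemma adj_lv A B C (d d' : 'I_3) : d != d' -> adj (A, B, C, d) (A, B, C, d').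
Proof. by move=> h; rewrite /e3c_adj !eqxx h. Qed.

Lemma adj_0 A B C C' : differ1 C C' -> adj (A, B, C, L0) (A, B, C', L0).
Proof. by move=> h; rewrite /e3c_adj !eqxx h /= orbT. Qed.

Lemma adj_1 A B B' C : differ1 B B' -> adj (A, B, C, L1) (A, B', C, L1).
Proof. by move=> h; rewrite /e3c_adj !eqxx h /= !orbT. Qed.

Lemma adj_2 A A' B C : differ1 A A' -> adj (A, B, C, L2) (A', B, C, L2).
Proof. by move=> h; rewrite /e3c_adj !eqxx h /= !orbT. Qed.

Definition goodF (u v : V) (L N : nat) (P : nat -> seq V) :=
  (forall k, k < N -> [/\ path adj u (P k), last u (P k) = v & size (P k) <= L]) /\
  (forall k l x, k < N -> l < N -> k != l -> x \in P k -> x \in P l -> x = v).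

Definition sgoodF (u v : V) (L N : nat) (P : nat -> seq V) :=
  goodF u v L N P /\ (forall k, k < N -> uniq (u :: P k)).

Lemma good_sgood u v L N P : goodF u v L N P -> sgoodF u v L N (fun k => shorten u (P k)).
Proof.
case=> h1 h2; split; first split.
- move=> k hk; have [p1 e1 e2] := h1 k hk.
  case: (shortenP p1) e1 => p' pp' up' sub e1; split => //.
  apply: leq_trans e2; apply: uniq_leq_size => //; by case/andP: up'.
- move=> k l x hk hl hkl.
  have [p1 _ _] := h1 k hk; have [q1 _ _] := h1 l hl.
  case: (shortenP p1) => p' _ _ subp; case: (shortenP q1) => q' _ _ subq.
  by move=> /subp xp /subq xq; apply: (h2 k l).
- move=> k hk; have [p1 _ _] := h1 k hk; by case: (shortenP p1).
Qed.

Lemma sgood_rev u v L N P : u != v -> sgoodF u v L N P ->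
  sgoodF v u L N (fun k => rev (belast u (P k))).
Proof.
move=> uv [[h1 h2] h3].
have key k : k < N -> uniq (v :: belast u (P k)).
  move=> hk; have := h3 k hk; have [_ e _] := h1 k hk.
  by rewrite lastI e rcons_uniq.
have memb k x : k < N -> x \in belast u (P k) -> x = u \/ (x \in P k /\ x != v).
  move=> hk hx; have := key k hk; rewrite /= => /andP[hv _].
  have := mem_belast hx; rewrite inE => /orP[/eqP ->|hxp]; [by left|right; split=> //].
  by apply: contraNneq hv => <-.
split; first split.
- move=> k hk; have [p e sz] := h1 k hk; split.
  + have := rev_path adj u (P k); rewrite e => ->.
    by rewrite (@eq_path _ _ adj) // => a b; rewrite adj_sym.
  + case: (P k) e => [/= e|y p' _]; first by rewrite e eqxx in uv.
    by rewrite /= rev_cons last_rcons.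
  + by rewrite size_rev size_belast.
- move=> k l x hk hl hkl; rewrite !mem_rev => /(memb _ _ hk)[//|[xk xv]] /(memb _ _ hl)[//|[xl _]].
  by have := h2 k l x hk hl hkl xk xl => e; rewrite e eqxx in xv.
- by move=> k hk; rewrite /= mem_rev rev_uniq; exact: key.
Qed.

End Graph.

Section Map.
Variables (r s t r' s' t' : nat).
Variable f : e3c_vertex r s t -> e3c_vertex r' s' t'.
Hypothesis finj : injective f.
Hypothesis fadj : forall x y, e3c_adj x y -> e3c_adj (f x) (f y).

Lemma good_map u v L N P : goodF u v L N P -> goodF (f u) (f v) L N (fun k => map f (P k)).
Proof.
case=> h1 h2; split.
- move=> k hk; have [p e sz] := h1 k hk; split.
  + exact: path_mapf p.
  + by rewrite last_map e.
  + by rewrite size_map.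
- move=> k l x hk hl hkl /mapP[y yk ->] /mapP[z zl /finj ez].
  by rewrite (h2 k l y) // ez.
Qed.
End Map.

Definition swd (d : 'I_3) : 'I_3 := if val d == 0 then L1 else if val d == 1 then L0 else d.

Definition sw r s t (x : e3c_vertex r t s) : e3c_vertex r s t :=
  let: (A, X, Y, d) := x in (A, Y, X, swd d).

Lemma swd_inj : injective swd.
Proof.
move=> [[|[|[|?]]] h1] [[|[|[|?]]] h2] //; rewrite /swd /= => /(congr1 val) //= e;
 exact: val_inj.
Qed.

Lemma sw_inj r s t : injective (@sw r s t).
Proof.
move=> [[[A X] Y] d] [[[A' X'] Y'] d'] /= [-> -> -> /swd_inj ->] //.
Qed.

Lemma sw_adj r s t (x y : e3c_vertex r t s) : e3c_adj x y -> e3c_adj (sw x) (sw y).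
Proof.
case: x => [[[A X] Y] d]; case: y => [[[A' X'] Y'] d'].
rewrite /e3c_adj /sw.
have hd : (swd d != swd d') = (d != d') by rewrite (inj_eq swd_inj).
rewrite hd; clear hd.
case: d => [[|[|[|?]]] h1] //; case: d' => [[|[|[|?]]] h2] //=;
 rewrite ?andbF ?orbF ?andbT //=; try done. all: by case/and3P => -> -> ->.
Qed.

Definition updk n (w : word n) (k : nat) : word n := upd w k./2 (nx (at_ w k./2) (odd k)).

Lemma half_lt r k : k < 2 * r -> k./2 < r.
Proof. move=> h; rewrite -(ltn_double) -muln2 mulnC; have := odd_double_half k; rewrite -muln2; lia. Qed.

Lemma updk_neq n r (w : word n) k : r <= n -> k < 2 * r -> updk w k != w.
Proof. move=> hr hk; apply: upd_neq; [have := half_lt hk; lia | exact: nx_neq]. Qed.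

Lemma updk_inj n r (w : word n) k l : r <= n -> k < 2 * r -> l < 2 * r -> updk w k = updk w l -> k = l.
Proof.
move=> hr hk hl /upd_inj [].
- have := half_lt hk; lia.
- have := half_lt hl; lia.
- exact: nx_neq.
- exact: nx_neq.
move=> e1; rewrite e1 => /nx_inj e2.
by rewrite -(odd_double_half k) -(odd_double_half l) e1 e2.
Qed.

Lemma all_iota_lt n : all (fun p => p < n) (iota 0 n).
Proof. by apply/allP => p; rewrite mem_iota. Qed.

Lemma iota_cover n (w w' : word n) : forall q, q < n -> at_ w q != at_ w' q -> q \in iota 0 n.
Proof. by move=> q hq _; rewrite mem_iota. Qed.

Lemma wk_last_iota n (w w' : word n) : last w (wk w w' (iota 0 n)) = w'.
Proof. apply: wk_last; [exact: all_iota_lt | exact: iota_cover]. Qed.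

Lemma path_cons2 (T : Type) (e : rel T) x y p : e x y -> path e y p -> path e x (y :: p).
Proof. by move=> /= -> ->. Qed.

Lemma path_catl (T : Type) (e : rel T) x p q z : path e x p -> last x p = z -> path e z q -> path e x (p ++ q).
Proof. by move=> h1 h2 h3; rewrite cat_path h1 h2 h3. Qed.

Section Segs.
Variables r s t : nat.
Local Notation V := (e3c_vertex r s t).
Local Notation adj := (@e3c_adj r s t).

Definition mB (a : word r) (c : word t) (l : 'I_3) (ws : seq (word s)) : seq V :=
  map (fun W => (a, W, c, l)) ws.
Definition mC (a : word r) (b : word s) (l : 'I_3) (ws : seq (word t)) : seq V :=
  map (fun W => (a, b, W, l)) ws.

Lemma path_mB a c W W' ps : all (fun p => p < s) ps ->
  path adj (a, W, c, L1) (mB a c L1 (wk W W' ps)).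
Proof.
move=> h; apply: (path_mapf (e1 := @differ1 s) (f := fun W => (a, W, c, L1))); last exact: wk_path.
by move=> x y; apply: adj_1.
Qed.

Lemma path_mC a b W W' ps : all (fun p => p < t) ps ->
  path adj (a, b, W, L0) (mC a b L0 (wk W W' ps)).
Proof.
move=> h; apply: (path_mapf (e1 := @differ1 t) (f := fun W => (a, b, W, L0))); last exact: wk_path.
by move=> x y; apply: adj_0.
Qed.

Lemma last_mB a c l W W' ps : last W (wk W W' ps) = W' ->
  last (a, W, c, l) (mB a c l (wk W W' ps)) = (a, W', c, l).
Proof. by move=> e; rewrite /mB (last_map (fun W => (a, W, c, l))) e. Qed.

Lemma last_mC a b l W W' ps : last W (wk W W' ps) = W' ->
  last (a, b, W, l) (mC a b l (wk W W' ps)) = (a, b, W', l).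
Proof. by move=> e; rewrite /mC (last_map (fun W => (a, b, W, l))) e. Qed.

Lemma mem_mB a c l ws x : x \in mB a c l ws -> exists2 W, x = (a, W, c, l) & W \in ws.
Proof. by case/mapP=> W h ->; exists W. Qed.

Lemma mem_mC a b l ws x : x \in mC a b l ws -> exists2 W, x = (a, b, W, l) & W \in ws.
Proof. by case/mapP=> W h ->; exists W. Qed.

Lemma size_mB a c l ws : size (mB a c l ws) = size ws.
Proof. by rewrite size_map. Qed.
Lemma size_mC a b l ws : size (mC a b l ws) = size ws.
Proof. by rewrite size_map. Qed.

End Segs.

Lemma updk_differ n r (w : word n) k : r <= n -> k < 2 * r -> differ1 w (updk w k).
Proof. move=> hr hk; apply: differ1_upd; [have := half_lt hk; lia | exact: nx_neq]. Qed.

Definition lev r s t (x : e3c_vertex r s t) : nat := val x.2.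
Definition cA r s t (x : e3c_vertex r s t) : word r := x.1.1.1.
Definition cB r s t (x : e3c_vertex r s t) : word s := x.1.1.2.
Definition cC r s t (x : e3c_vertex r s t) : word t := x.1.2.

Ltac dest := repeat match goal with H : is_true (_ || _) |- _ => case/orP: H => H end.
Ltac substx x := match goal with
  | H : is_true (x == _) |- _ => move/eqP: H => ->
  | H : is_true (x \in mB _ _ _ _) |- _ => case/mem_mB: H => ? -> ?
  | H : is_true (x \in mC _ _ _ _) |- _ => case/mem_mC: H => ? -> ?
  end.

Lemma updk_at_inj n r (w : word n) k l : r <= n -> k < 2 * r -> l < 2 * r ->
  at_ (updk w k) l./2 = at_ (updk w l) l./2 -> k = l.
Proof.
move=> hr hk hl; have hk2 := half_lt hk; have hl2 := half_lt hl.
rewrite /updk !at_upd; try lia.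
rewrite eqxx; case: eqP => [e|ne] h.
  rewrite e in h; have := nx_inj h => eo.
  by rewrite -(odd_double_half k) -(odd_double_half l) e eo.
by have := nx_neq (at_ w l./2) (odd l); rewrite -h eqxx.
Qed.

Definition posF (j n : nat) := j :: [seq q <- iota 0 n | q != j].
Definition posL (i n : nat) := rcons [seq q <- iota 0 n | q != i] i.

Lemma posF_all j n : j < n -> all (fun p => p < n) (posF j n).
Proof. move=> hj; rewrite /= hj /=; apply/allP => q; rewrite mem_filter mem_iota; case/andP=> _; lia. Qed.
Lemma posL_all i n : i < n -> all (fun p => p < n) (posL i n).
Proof. move=> hi; rewrite /posL all_rcons hi /=; apply/allP => q; rewrite mem_filter mem_iota; case/andP=> _; lia. Qed.
Lemma posF_cov j n (w w' : word n) q : q < n -> at_ w q != at_ w' q -> q \in posF j n.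
Proof. by move=> hq _; rewrite inE mem_filter mem_iota hq /=; case: eqP. Qed.
Lemma posL_cov i n (w w' : word n) q : q < n -> at_ w q != at_ w' q -> q \in posL i n.
Proof. by move=> hq _; rewrite mem_rcons inE mem_filter mem_iota hq /=; case: eqP. Qed.
Lemma posL_notin i n : i \notin [seq q <- iota 0 n | q != i].
Proof. by rewrite mem_filter eqxx. Qed.

Lemma filter_neq_size j n : j < n -> size [seq q <- iota 0 n | q != j] = n.-1.
Proof.
move=> hj; rewrite size_filter.
have h1 := count_predC (pred1 j) (iota 0 n).
have h2 : count (pred1 j) (iota 0 n) = 1.
  by rewrite (count_uniq_mem _ (iota_uniq 0 n)) mem_iota hj.
have h3 : count (predC (pred1 j)) (iota 0 n) = count (fun q => q != j) (iota 0 n) by [].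
rewrite size_iota in h1; lia.
Qed.

Lemma posF_size j n : j < n -> size (posF j n) = n.
Proof. move=> hj; rewrite /= filter_neq_size //; lia. Qed.
Lemma posL_size j n : j < n -> size (posL j n) = n.
Proof. move=> hj; rewrite /posL size_rcons filter_neq_size //; lia. Qed.

Section Case2.
Variables r s t : nat.
Variables (A : word r) (B B' : word s) (C C' : word t).
Hypotheses (hr : 0 < r) (hrs : r <= s) (hrt : r <= t) (hB : B != B') (hC : C != C').
Local Notation V := (e3c_vertex r s t).
Local Notation adj := (@e3c_adj r s t).

Local Notation u := ((A, B, C, L0) : V).
Local Notation v := ((A, B', C', L2) : V).
Local Notation wB := (wk B B' (iota 0 s)).
Local Notation wC := (wk C C' (iota 0 t)).
Local Notation W1 := (nth C wC 0).

Definition Y2 : seq V := (A, B, C, L1) :: mB A C L1 wB ++ (A, B', C, L0) :: mC A B' L0 wC ++ [:: v].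
Definition X2 : seq V := mC A B L0 wC ++ (A, B, C', L1) :: mB A C' L1 wB ++ [:: v].
Definition P2 k : seq V :=
  let As := updk A k in let W0 := updk C k in
  if W0 == W1 then
    (A, B, C, L2) :: (As, B, C, L2) :: (As, B, C, L1) :: mB As C L1 wB ++
    (As, B', C, L0) :: mC As B' L0 wC ++ [:: (As, B', C', L2); v]
  else
    (A, B, W0, L0) :: (A, B, W0, L2) :: (As, B, W0, L2) :: (As, B, W0, L1) :: mB As W0 L1 wB ++
    (As, B', W0, L0) :: mC As B' L0 (wk W0 C' (iota 0 t)) ++ [:: (As, B', C', L2); v].
Definition F2 k := if k < 2 * r then P2 k else if k == 2 * r then Y2 else X2.

Lemma lastB : last B wB = B'. Proof. exact: wk_last_iota. Qed.
Lemma lastC : last C wC = C'. Proof. exact: wk_last_iota. Qed.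

Ltac lv := (apply: adj_lv; by []).


Lemma Y2_ok : [/\ path adj u Y2, last u Y2 = v & size Y2 <= s + t + 7].
Proof.
split.
- apply: path_cons2; first lv.
  apply: path_catl; [exact: path_mB (all_iota_lt s) | exact: last_mB lastB |].
  apply: path_cons2; first lv.
  apply: path_catl; [exact: path_mC (all_iota_lt t) | exact: last_mC lastC |].
  by apply: path_cons2; first lv.
- by rewrite /Y2 /= !last_cat /= last_cat.
- rewrite /Y2 /= size_cat /= size_cat /= size_mB size_mC.
  have := wk_size B B' (iota 0 s); have := wk_size C C' (iota 0 t); rewrite !size_iota.
  lia.
Qed.


Lemma X2_ok : [/\ path adj u X2, last u X2 = v & size X2 <= s + t + 7].
Proof.
split.
- apply: path_catl; [exact: path_mC (all_iota_lt t) | exact: last_mC lastC |].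
  apply: path_cons2; first lv.
  apply: path_catl; [exact: path_mB (all_iota_lt s) | exact: last_mB lastB |].
  by apply: path_cons2; first lv.
- by rewrite /X2 /= !last_cat /= last_cat.
- rewrite /X2 /= size_cat /= size_cat /= size_mB size_mC.
  have := wk_size B B' (iota 0 s); have := wk_size C C' (iota 0 t); rewrite !size_iota.
  lia.
Qed.

Lemma P2_ok k : k < 2 * r -> [/\ path adj u (P2 k), last u (P2 k) = v & size (P2 k) <= s + t + 7].
Proof.
move=> hk; have dA := updk_differ A (leqnn r) hk; have dC := updk_differ C hrt hk.
have hs := wk_size B B' (iota 0 s); have ht := wk_size C C' (iota 0 t).
have ht' := wk_size (updk C k) C' (iota 0 t).
rewrite !size_iota in hs ht ht'.
rewrite /P2; case: ifP => _; split.
- apply: path_cons2; first lv.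
  apply: path_cons2; first exact: adj_2.
  apply: path_cons2; first lv.
  apply: path_catl; [exact: path_mB (all_iota_lt s) | exact: last_mB lastB |].
  apply: path_cons2; first lv.
  apply: path_catl; [exact: path_mC (all_iota_lt t) | exact: last_mC lastC |].
  apply: path_cons2; first lv.
  by apply: path_cons2 => //; apply: adj_2; rewrite differ1C.
- by rewrite /= !last_cat /= last_cat.
- rewrite /= size_cat /= size_cat /= size_mB size_mC; lia.
- apply: path_cons2; first exact: adj_0.
  apply: path_cons2; first lv.
  apply: path_cons2; first exact: adj_2.
  apply: path_cons2; first lv.
  apply: path_catl; [exact: path_mB (all_iota_lt s) | exact: last_mB lastB |].
  apply: path_cons2; first lv.
  apply: path_catl; [exact: path_mC (all_iota_lt t) | apply: last_mC; exact: wk_last_iota |].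
  apply: path_cons2; first lv.
  by apply: path_cons2 => //; apply: adj_2; rewrite differ1C.
- by rewrite /= !last_cat /= last_cat.
- rewrite /= size_cat /= size_cat /= size_mB size_mC; lia.
Qed.


Lemma memY2 x : x \in Y2 -> x = v \/ (cA x = A /\ ((lev x = 1 /\ cC x = C) \/ (lev x = 0 /\ cB x = B'))).
Proof.
rewrite /Y2 !(inE, mem_cat) => h; dest; substx x; rewrite /lev /cA /cB /cC /=;
  by [left | right; split=> //; left | right; split=> //; right].
Qed.

Lemma memX2 x : x \in X2 -> x = v \/ (cA x = A /\ ((lev x = 0 /\ cB x = B /\ cC x \in wC) \/ (lev x = 1 /\ cC x = C'))).
Proof.
rewrite /X2 !(inE, mem_cat) => h; dest; substx x; rewrite /lev /cA /cB /cC /=;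
  by [left | right; split=> //; left | right; split=> //; right].
Qed.

Lemma memP2 k x : x \in P2 k -> x = v \/ cA x = updk A k \/
  (cA x = A /\ cB x = B /\ ((updk C k != W1 /\ (lev x = 0 \/ lev x = 2) /\ cC x = updk C k) \/
                              (updk C k == W1 /\ lev x = 2 /\ cC x = C))).
Proof.
rewrite /P2; case: ifP => hW; rewrite !(inE, mem_cat) => h; dest; substx x; rewrite /lev /cA /cB /cC /=;
  rewrite ?hW; intuition.
Qed.


Ltac eqtac := match goal with
  | H1 : ?z = ?a, H2 : ?z = ?b |- ?a = ?b => by rewrite -H1 -H2
  | H1 : ?a = ?z, H2 : ?b = ?z |- ?a = ?b => by rewrite H1 H2
  end.

Lemma nB : B <> B'. Proof. by move/eqP; rewrite (negbTE hB). Qed.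
Lemma nC : C <> C'. Proof. by move/eqP; rewrite (negbTE hC). Qed.
Lemma nAk k : k < 2 * r -> updk A k <> A.
Proof. by move=> hk /eqP; rewrite (negbTE (updk_neq A (leqnn r) hk)). Qed.
Lemma nCk k : k < 2 * r -> updk C k <> C.
Proof. by move=> hk /eqP; rewrite (negbTE (updk_neq C hrt hk)). Qed.

Lemma dYX x : x \in Y2 -> x \in X2 -> x = v.
Proof.
move=> h1 h2; have := memY2 h1; have := memX2 h2; have := nB; have := nC; intuition; congruence.
Qed.

Lemma dYP k x : k < 2 * r -> x \in Y2 -> x \in P2 k -> x = v.
Proof.
move=> hk h1 h2; have := memY2 h1; have := memP2 h2; have := nB; have := nC; have := nAk hk; intuition; congruence.
Qed.

Lemma dXP k x : k < 2 * r -> x \in X2 -> x \in P2 k -> x = v.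
Proof.
move=> hk h1 h2; have := memX2 h1; have := memP2 h2; have := nB; have := nC; have := nAk hk; intuition; try congruence.
rewrite H11 in H9; have := wk_head (all_iota_lt t) _ (nx_neq _ _) H9.
by move=> /(_ (leq_trans (half_lt hk) hrt)) e; rewrite -e eqxx in H7.
Qed.

Lemma dPP k l x : k < 2 * r -> l < 2 * r -> k != l -> x \in P2 k -> x \in P2 l -> x = v.
Proof.
move=> hk hl hkl h1 h2; have := memP2 h1; have := memP2 h2; have := nB; have := nC; have := nAk hk; have := nAk hl;
 have := nCk hk; have := nCk hl; intuition; try congruence;
 repeat match goal with H : is_true (_ == _) |- _ => move/eqP: H => H end;
 exfalso; move/negP: hkl; apply; apply/eqP;
 first [apply: (@updk_inj _ _ A k l (leqnn r) hk hl); eqtac | apply: (@updk_inj _ _ C k l hrt hk hl); eqtac].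
Qed.


Lemma F2_good : goodF u v (s + t + 7) (2 * r + 2) F2.
Proof.
split.
- move=> k hk; rewrite /F2; case: ifP => [hk'|_]; first exact: P2_ok.
  by case: ifP => _; [exact: Y2_ok | exact: X2_ok].
- move=> k l x hk hl hkl; rewrite /F2.
  case: (ltnP k (2 * r)) => hk'; case: (ltnP l (2 * r)) => hl'.
  + exact: dPP.
  + case: ifP => _ h1 h2; [exact: dYP h2 h1 | exact: dXP h2 h1].
  + case: ifP => _ h1 h2; [exact: dYP h1 h2 | exact: dXP h1 h2].
  + case: ifP => /eqP e1; case: ifP => /eqP e2.
    * by move: hkl; rewrite e1 e2 eqxx.
    * by move=> h1 h2; exact: dYX h1 h2.
    * by move=> h1 h2; exact: dYX h2 h1.
    * have e : k = l by lia.
      by rewrite e eqxx in hkl.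
Qed.

End Case2.

Section Case1.
Variables r s t : nat.
Variables (A : word r) (B B' : word s) (C C' : word t).
Hypotheses (hr : 0 < r) (hrs : r <= s) (hrt : r <= t) (hB : B != B') (hC : C != C').
Local Notation V := (e3c_vertex r s t).
Local Notation adj := (@e3c_adj r s t).
Local Notation u := ((A, B, C, L0) : V).
Local Notation v := ((A, B', C', L1) : V).
Local Notation wB := (wk B B' (iota 0 s)).
Local Notation wC := (wk C C' (iota 0 t)).

Definition pC k := updk C k == C'.
Definition pB k := updk B' k == B.
Definition hCd := has pC (iota 0 (2 * r)).
Definition hBd := has pB (iota 0 (2 * r)).
Definition kC := find pC (iota 0 (2 * r)).
Definition kB := find pB (iota 0 (2 * r)).
Definition ee k := if hCd && hBd then (if k == kC then kB else if k == kB then kC else k) else k.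

Lemma kC_spec : hCd -> kC < 2 * r /\ updk C kC = C'.
Proof.
move=> h; have := h; rewrite /hCd has_find size_iota => hlt; split => //.
by have := nth_find 0 h; rewrite -/kC nth_iota // => /eqP.
Qed.
Lemma kB_spec : hBd -> kB < 2 * r /\ updk B' kB = B.
Proof.
move=> h; have := h; rewrite /hBd has_find size_iota => hlt; split => //.
by have := nth_find 0 h; rewrite -/kB nth_iota // => /eqP.
Qed.

Lemma kC_uniq k : k < 2 * r -> updk C k = C' -> hCd /\ kC = k.
Proof.
move=> hk e; have h : hCd by apply/hasP; exists k; rewrite ?mem_iota //= /pC e.
split=> //; have [h1 h2] := kC_spec h; apply: (@updk_inj _ _ C kC k hrt h1 hk); by rewrite h2 e.
Qed.
Lemma kB_uniq k : k < 2 * r -> updk B' k = B -> hBd /\ kB = k.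
Proof.
move=> hk e; have h : hBd by apply/hasP; exists k; rewrite ?mem_iota //= /pB e.
split=> //; have [h1 h2] := kB_spec h; apply: (@updk_inj _ _ B' kB k hrs h1 hk); by rewrite h2 e.
Qed.

Lemma ee_lt k : k < 2 * r -> ee k < 2 * r.
Proof.
rewrite /ee; case: ifP => // /andP[h1 h2] hk.
have [? _] := kC_spec h1; have [? _] := kB_spec h2.
by case: ifP => _ //; case: ifP.
Qed.

Lemma ee_inj k l : ee k = ee l -> k = l.
Proof.
rewrite /ee; case: ifP => // _.
by do ! case: ifP => /eqP ?; move=> ?; lia.
Qed.


Lemma ee_key k l : k < 2 * r -> l < 2 * r -> updk C k = C' -> updk B' (ee l) = B -> ee k = ee l.
Proof.
move=> hk hl e1 e2; have [h1 h2] := kC_uniq hk e1; have [h3 h4] := kB_uniq (ee_lt hl) e2.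
by rewrite {1}/ee h1 h3 /= -h2 eqxx.
Qed.

Definition Tk k := updk B' (ee k).

Definition P1 k : seq V :=
  let W0 := updk C k in let T := Tk k in
  (A, B, W0, L0) :: (A, B, W0, L1) :: mB A W0 L1 (wk B T (posF (ee k)./2 s)) ++
  (A, T, W0, L0) :: mC A T L0 (wk W0 C' (posL k./2 t)) ++ [:: (A, T, C', L1); v].
Definition Y1 : seq V := (A, B, C, L1) :: mB A C L1 wB ++ (A, B', C, L0) :: mC A B' L0 wC ++ [:: v].
Definition Z1 : seq V :=
  let As := updk A 0 in
  (A, B, C, L2) :: (As, B, C, L2) :: (As, B, C, L1) :: mB As C L1 wB ++
  (As, B', C, L0) :: mC As B' L0 wC ++ [:: (As, B', C', L2); (A, B', C', L2); v].
Definition F1 k := if k < 2 * r then P1 k else if k == 2 * r then Y1 else Z1.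

Lemma lastB1 : last B wB = B'. Proof. exact: wk_last_iota. Qed.
Lemma lastC1 : last C wC = C'. Proof. exact: wk_last_iota. Qed.

Ltac lv1 := (apply: adj_lv; by []).

Lemma Y1_ok : [/\ path adj u Y1, last u Y1 = v & size Y1 <= s + t + 7].
Proof.
split.
- apply: path_cons2; first lv1.
  apply: path_catl; [exact: path_mB (all_iota_lt s) | exact: last_mB lastB1 |].
  apply: path_cons2; first lv1.
  apply: path_catl; [exact: path_mC (all_iota_lt t) | exact: last_mC lastC1 |].
  by apply: path_cons2; first lv1.
- by rewrite /Y1 /= !last_cat /= last_cat.
- rewrite /Y1 /= size_cat /= size_cat /= size_mB size_mC.
  have := wk_size B B' (iota 0 s); have := wk_size C C' (iota 0 t); rewrite !size_iota.
  lia.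
Qed.

Lemma Z1_ok : [/\ path adj u Z1, last u Z1 = v & size Z1 <= s + t + 7].
Proof.
have h0 : 0 < 2 * r by lia.
have dA := updk_differ A (leqnn r) h0.
split.
- apply: path_cons2; first lv1.
  apply: path_cons2; first exact: adj_2.
  apply: path_cons2; first lv1.
  apply: path_catl; [exact: path_mB (all_iota_lt s) | exact: last_mB lastB1 |].
  apply: path_cons2; first lv1.
  apply: path_catl; [exact: path_mC (all_iota_lt t) | exact: last_mC lastC1 |].
  apply: path_cons2; first lv1.
  apply: path_cons2; first by apply: adj_2; rewrite differ1C.
  by apply: path_cons2; first lv1.
- by rewrite /Z1 /= !last_cat /= last_cat.
- rewrite /Z1 /= size_cat /= size_cat /= size_mB size_mC.
  have := wk_size B B' (iota 0 s); have := wk_size C C' (iota 0 t); rewrite !size_iota.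
  lia.
Qed.

Lemma P1_ok k : k < 2 * r -> [/\ path adj u (P1 k), last u (P1 k) = v & size (P1 k) <= s + t + 7].
Proof.
move=> hk; have hek := ee_lt hk.
have dC := updk_differ C hrt hk; have dT := updk_differ B' hrs hek.
have hj : (ee k)./2 < s by have := half_lt hek; lia.
have hi : k./2 < t by have := half_lt hk; lia.
have lB : last B (wk B (Tk k) (posF (ee k)./2 s)) = Tk k.
  by apply: wk_last; [exact: posF_all | exact: posF_cov].
have lC : last (updk C k) (wk (updk C k) C' (posL k./2 t)) = C'.
  by apply: wk_last; [exact: posL_all | exact: posL_cov].
split.
- apply: path_cons2; first exact: adj_0.
  apply: path_cons2; first lv1.
  apply: path_catl; [exact: path_mB (posF_all hj) | exact: last_mB lB |].
  apply: path_cons2; first lv1.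
  apply: path_catl; [exact: path_mC (posL_all hi) | exact: last_mC lC |].
  apply: path_cons2; first lv1.
  by apply: path_cons2 => //; apply: adj_1; rewrite differ1C.
- by rewrite /P1; set wb := wk B _ _; set wc := wk _ C' _; rewrite /= !last_cat /= last_cat.
- have := wk_size B (Tk k) (posF (ee k)./2 s); have := wk_size (updk C k) C' (posL k./2 t).
  rewrite posF_size // posL_size //.
  rewrite /P1; set wb := wk B _ _; set wc := wk _ C' _.
  rewrite /= size_cat /= size_cat /= size_mB size_mC; lia.
Qed.


Lemma memY1 x : x \in Y1 -> x = v \/ (cA x = A /\ ((lev x = 1 /\ cC x = C) \/ (lev x = 0 /\ cB x = B'))).
Proof.
rewrite /Y1 !(inE, mem_cat) => h; dest; substx x; rewrite /lev /cA /cB /cC /=;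
  by [left | right; split=> //; left | right; split=> //; right].
Qed.

Lemma memZ1 x : x \in Z1 -> x = v \/ lev x = 2 \/ cA x = updk A 0.
Proof.
rewrite /Z1 !(inE, mem_cat) => h; dest; substx x; rewrite /lev /cA /cB /cC /=; intuition.
Qed.

Lemma memP1 k x : k < 2 * r -> x \in P1 k -> x = v \/ (cA x = A /\
  ((lev x = 0 /\ cB x = B /\ cC x = updk C k) \/
   (lev x = 1 /\ cC x = updk C k /\ (cB x = B \/ at_ (cB x) (ee k)./2 = at_ (Tk k) (ee k)./2)) \/
   (lev x = 0 /\ cB x = Tk k /\ (cC x = C' \/ at_ (cC x) k./2 = at_ (updk C k) k./2)) \/
   (lev x = 1 /\ cB x = Tk k /\ cC x = C'))).
Proof.
move=> hk; have hek := ee_lt hk.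
have hj : (ee k)./2 < s by have := half_lt hek; lia.
have hi : k./2 < t by have := half_lt hk; lia.
have lC : last (updk C k) (wk (updk C k) C' (posL k./2 t)) = C'.
  by apply: wk_last; [exact: posL_all | exact: posL_cov].
rewrite /P1 !(inE, mem_cat) => h; dest;
match goal with
 | H : is_true (x == _) |- _ => move/eqP: H => ->; rewrite /lev /cA /cB /cC /=; intuition
 | H : is_true (x \in mB _ _ _ _) |- _ => case/mem_mB: H => W -> hW; have := wk_first hj hW;
     rewrite /lev /cA /cB /cC /=; intuition
 | H : is_true (x \in mC _ _ _ _) |- _ => case/mem_mC: H => W -> hW;
     have := wk_lastpos hi (posL_notin _ _) hW; rewrite lC /lev /cA /cB /cC /=; intuition
end.
Qed.


Ltac eqtac1 := match goal with
  | H1 : ?z = ?a, H2 : ?z = ?b |- ?a = ?b => by rewrite -H1 -H2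
  | H1 : ?a = ?z, H2 : ?b = ?z |- ?a = ?b => by rewrite H1 H2
  end.

Lemma nB1 : B <> B'. Proof. by move/eqP; rewrite (negbTE hB). Qed.
Lemma nC1 : C <> C'. Proof. by move/eqP; rewrite (negbTE hC). Qed.
Lemma nA0 : updk A 0 <> A.
Proof. have h0 : 0 < 2 * r by lia. by move/eqP; rewrite (negbTE (updk_neq A (leqnn r) h0)). Qed.
Lemma nCk1 k : k < 2 * r -> updk C k <> C.
Proof. by move=> hk /eqP; rewrite (negbTE (updk_neq C hrt hk)). Qed.
Lemma nTk k : k < 2 * r -> Tk k <> B'.
Proof. by move=> hk /eqP; rewrite (negbTE (updk_neq B' hrs (ee_lt hk))). Qed.

Lemma ee_key' k l : k < 2 * r -> l < 2 * r -> updk C k = C' -> Tk l = B -> ee k = ee l.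
Proof. exact: ee_key. Qed.

Lemma Tk_inj k l : k < 2 * r -> l < 2 * r -> Tk k = Tk l -> k = l.
Proof. move=> hk hl e; apply: ee_inj; exact: (@updk_inj _ _ B' _ _ hrs (ee_lt hk) (ee_lt hl) e). Qed.

Lemma LC1 k l (x : V) : k < 2 * r -> l < 2 * r -> cC x = updk C k -> at_ (cC x) l./2 = at_ (updk C l) l./2 -> k = l.
Proof. move=> hk hl e; rewrite e => h; exact: (updk_at_inj hrt hk hl h). Qed.

Lemma LB1 k l (x : V) : k < 2 * r -> l < 2 * r -> cB x = Tk l -> at_ (cB x) (ee k)./2 = at_ (Tk k) (ee k)./2 -> k = l.
Proof.
move=> hk hl e; rewrite e /Tk => h; apply: ee_inj; apply: esym.
exact: (updk_at_inj hrs (ee_lt hl) (ee_lt hk) h).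
Qed.

Lemma dYZ1 x : x \in Y1 -> x \in Z1 -> x = v.
Proof. move=> h1 h2; have := memY1 h1; have := memZ1 h2; have := nA0; intuition; congruence. Qed.

Lemma dYP1 k x : k < 2 * r -> x \in Y1 -> x \in P1 k -> x = v.
Proof.
move=> hk h1 h2; have := memY1 h1; have := memP1 hk h2; have := nB1; have := nC1; have := nCk1 hk;
  have := nTk hk; intuition; congruence.
Qed.

Lemma dZP1 k x : k < 2 * r -> x \in Z1 -> x \in P1 k -> x = v.
Proof. move=> hk h1 h2; have := memZ1 h1; have := memP1 hk h2; have := nA0; intuition; congruence. Qed.

Lemma dPP1 k l x : k < 2 * r -> l < 2 * r -> k != l -> x \in P1 k -> x \in P1 l -> x = v.
Proof.
move=> hk hl hkl h1 h2; have := memP1 hk h1; have := memP1 hl h2; have := nB1; have := nC1;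
  have := nCk1 hk; have := nCk1 hl; have := nTk hk; have := nTk hl; intuition; try congruence;
  exfalso; move/negP: hkl; apply; apply/eqP;
  first [ by apply: (@updk_inj _ _ C k l hrt hk hl); eqtac1
        | by apply: Tk_inj => //; eqtac1
        | by apply: ee_inj; apply: ee_key' => //; eqtac1
        | by apply: esym; apply: ee_inj; apply: ee_key' => //; eqtac1
        | by eapply LC1; eassumption
        | by apply: esym; eapply LC1; eassumption
        | by eapply LB1; eassumption
        | by apply: esym; eapply LB1; eassumption ].
Qed.


Lemma F1_good : goodF u v (s + t + 7) (2 * r + 2) F1.
Proof.
split.
- move=> k hk; rewrite /F1; case: ifP => [hk'|_]; first exact: P1_ok.
  by case: ifP => _; [exact: Y1_ok | exact: Z1_ok].
- move=> k l x hk hl hkl; rewrite /F1.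
  case: (ltnP k (2 * r)) => hk'; case: (ltnP l (2 * r)) => hl'.
  + exact: dPP1.
  + case: ifP => _ h1 h2; [exact: dYP1 h2 h1 | exact: dZP1 h2 h1].
  + case: ifP => _ h1 h2; [exact: dYP1 h1 h2 | exact: dZP1 h1 h2].
  + case: ifP => /eqP e1; case: ifP => /eqP e2.
    * by move: hkl; rewrite e1 e2 eqxx.
    * by move=> h1 h2; exact: dYZ1 h1 h2.
    * by move=> h1 h2; exact: dYZ1 h2 h1.
    * have e : k = l by lia.
      by rewrite e eqxx in hkl.
Qed.

End Case1.


Lemma finish r s t (u v : e3c_vertex r s t) L N P : sgoodF u v L N P ->
  exists Q : 'I_N -> seq (e3c_vertex r s t),
    (forall i, is_uv_path u v (Q i) /\ size (Q i) <= L) /\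
    (forall i j, i != j -> internally_disjoint v (Q i) (Q j)).
Proof.
move=> [[h1 h2] h3]; exists (fun i => P (val i)); split.
- move=> i; have [p e sz] := h1 _ (ltn_ord i); split => //; split => //; exact: h3 _ (ltn_ord i).
- move=> i j hij x hx hy; exact: (h2 _ _ _ (ltn_ord i) (ltn_ord j) hij hx hy).
Qed.

Lemma goodL r s t (u v : e3c_vertex r s t) L L' N P : L = L' -> goodF u v L N P -> goodF u v L' N P.
Proof. by move=> ->. Qed.

Theorem lemma17 (r s t : nat) (A A' : word r) (B B' : word s) (C C' : word t)
    (d d' : 'I_3) :
  1 <= r -> r <= s -> s <= t ->
  A = A' -> B != B' -> C != C' -> d != d' ->
  exists P : 'I_(2 * r + 2) -> seq (e3c_vertex r s t),
    (forall i, is_uv_path (A, B, C, d) (A', B', C', d') (P i)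
               /\ size (P i) <= s + t + 7) /\
    (forall i j, i != j -> internally_disjoint (A', B', C', d') (P i) (P j)).
Proof.
move=> hr hrs hst <- hB hC hd.
have hrt : r <= t by lia.
have hB' : B' != B by rewrite eq_sym.
have hC' : C' != C by rewrite eq_sym.
have uv0 : forall (d1 d2 : 'I_3), (A, B', C', d1) != (A, B, C, d2) :> e3c_vertex r s t.
  by move=> d1 d2; apply/eqP => -[e _ _]; rewrite e eqxx in hB.
have swgood : forall (X X' : word t) (Y Y' : word s) (e1 e2 : 'I_3) P,
  goodF (A, X, Y, e1) (A, X', Y', e2) (t + s + 7) (2 * r + 2) P ->
  goodF (A, Y, X, swd e1) (A, Y', X', swd e2) (s + t + 7) (2 * r + 2) (fun k => map (@sw r s t) (P k)).
  move=> X X' Y Y' e1 e2 P g.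
  have := good_map (@sw_inj r s t) (@sw_adj r s t) g.
  by rewrite (addnC t s).
have hr0 : 0 < r by lia.
case: d hd => [[|[|[|?]]] hd0] //; case: d' => [[|[|[|?]]] hd1] // _.
- have -> : Ordinal hd0 = L0 by apply: val_inj.
  have -> : Ordinal hd1 = L1 by apply: val_inj.
  apply: finish; apply: good_sgood; exact: F1_good.
- have -> : Ordinal hd0 = L0 by apply: val_inj.
  have -> : Ordinal hd1 = L2 by apply: val_inj.
  apply: finish; apply: good_sgood; exact: F2_good.
- have -> : Ordinal hd0 = L1 by apply: val_inj.
  have -> : Ordinal hd1 = L0 by apply: val_inj.
  apply: finish; apply: good_sgood; apply: (swgood C C' B B' L0 L1); exact: F1_good.
- have -> : Ordinal hd0 = L1 by apply: val_inj.
  have -> : Ordinal hd1 = L2 by apply: val_inj.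
  apply: finish; apply: good_sgood; apply: (swgood C C' B B' L0 L2); exact: F2_good.
- have -> : Ordinal hd0 = L2 by apply: val_inj.
  have -> : Ordinal hd1 = L0 by apply: val_inj.
  apply: finish; apply: (sgood_rev (uv0 L0 L2)); apply: good_sgood; exact: F2_good.
- have -> : Ordinal hd0 = L2 by apply: val_inj.
  have -> : Ordinal hd1 = L1 by apply: val_inj.
  apply: finish; apply: (sgood_rev (uv0 L1 L2)); apply: good_sgood.
  apply: (swgood C' C B' B L0 L2); exact: F2_good.
Qed.
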